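(* Let $\mathscr D:\mathscr N=\mathscr N_1\cup\cdots\cup\mathscr N_k$ be a decomposition of a chemical reaction network $\mathscr N$, let $\mathscr C_{\mathscr D}$ be its set of common complexes and $d=|\mathscr C_{\mathscr D}|$. For each $i$ let $\ell_i$ be the number of linkage classes of $\mathscr N_i$ and $h_i=|\mathscr C_i\cap\mathscr C_{\mathscr D}|$, and let $\ell$ be the number of linkage classes of $\mathscr N$. Then $\mathscr D$ is incidence independent if and only if $$\sum_{i=1}^k \ell_i-\ell=\sum_{i=1}^k h_i-d.$$
   Context: A chemical reaction network (CRN) $\mathscr N=(\mathscr S,\mathscr C,\mathscr R)$ consists of a finite set of species $\mathscr S$, a finite set of complexes $\mathscr C$ (nonnegative integer combinations of species), and a set of reactions $\mathscr R\subseteq\mathscr C\times\mathscr C$ with no reaction $(y,y)$ and every complex occurring in some reaction; it is viewed as a directed graph on $\mathscr C$. Linkage classes are the connected components of the underlying undirected graph. A decomposition $\mathscr N=\mathscr N_1\cup\cdots\cup\mathscr N_k$ is given by a partition $\{\mathscr R_1,\dots,\mathscr R_k\}$ of $\mathscr R$ (with $k\ge 2$); the subnetwork $\mathscr N_i=(\mathscr S_i,\mathscr C_i,\mathscr R_i)$ has as complex set $\mathscr C_i$ the complexes occurring in reactions of $\mathscr R_i$ and as species the species occurring in $\mathscr C_i$. The incidence map $I_a:\mathbb R^{\mathscr R}\to\mathbb R^{\mathscr C}$ sends the basis vector of a reaction $y\to y'$ to $\omega_{y'}-\omega_y$; similarly for each subnetwork (with images viewed inside $\mathbb R^{\mathscr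 C}$). The decomposition is incidence independent if $\operatorname{Im} I_a$ is the direct sum of the images of the incidence maps of the $\mathscr N_i$; since $\dim\operatorname{Im}I_a=n-\ell$ ($n$ = number of complexes), this is equivalent to $n-\ell=\sum_i(n_i-\ell_i)$. The set $\mathscr C_{\mathscr D}$ of common complexes consists of all complexes belonging to the complex sets of at least two distinct subnetworks. *)

(* Defs.v *)
From HB Require Import structures.
From mathcomp Require Import all_boot all_order all_algebra.
From mathcomp Require Import reals.
Set Implicit Arguments. Unset Strict Implicit. Unset Printing Implicit Defensive.
Import GRing.Theory.
Local Open Scope ring_scope.

(* A chemical reaction network: the complexes form a finite type [C]
   (the complex set), reactions a set [R] of ordered pairs (y, y'). *)
Section CRN.
Variable C : finType.

Definition is_CRN (R : {set C * C}) : Prop :=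
  (forall y : C, (y, y) \notin R) /\
  (forall y : C, exists2 r, r \in R & (r.1 == y) || (r.2 == y)).

Definition complexes (Rs : {set C * C}) : {set C} :=
  [set y : C | [exists r in Rs, (r.1 == y) || (r.2 == y)]].

Definition undirected (Rs : {set C * C}) : rel C :=
  fun x y => ((x, y) \in Rs) || ((y, x) \in Rs).

Definition nlinkage (Rs : {set C * C}) : nat :=
  n_comp (undirected Rs) (mem (complexes Rs)).

Definition ncomplexes (Rs : {set C * C}) : nat := #|complexes Rs|.

Definition is_decomposition (R : {set C * C}) (k : nat)
    (Rs : 'I_k -> {set C * C}) : Prop :=
  [/\ (2 <= k)%N,
      (forall i, Rs i != set0),
      (forall i j, i != j -> [disjoint Rs i & Rs j]) &
      \bigcup_(i < k) Rs i = R].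

Definition common_complexes (k : nat) (Rs : 'I_k -> {set C * C}) : {set C} :=
  [set y : C | [exists i : 'I_k, exists j : 'I_k,
     [&& i != j, y \in complexes (Rs i) & y \in complexes (Rs j)]]].

(* incidence map into R^C, realized as row vectors indexed by enum_rank *)
Variable F : realType.

Definition omega (y : C) : 'rV[F]_#|C| := delta_mx 0 (enum_rank y).

Definition incidence_vec (r : C * C) : 'rV[F]_#|C| := omega r.2 - omega r.1.

Definition incidence_image (Rs : {set C * C}) : {vspace 'rV[F]_#|C|} :=
  <<[seq incidence_vec r | r <- enum Rs]>>%VS.

Definition incidence_independent (R : {set C * C}) (k : nat)
    (Rs : 'I_k -> {set C * C}) : Prop :=
  incidence_image R = (\sum_(i < k) incidence_image (Rs i))%VS /\
  directv (\sum_(i < k) incidence_image (Rs i))%VS.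

End CRN.

(* Main.v *)
Require Import Defs.
From mathcomp Require Import all_boot all_order all_algebra.
From mathcomp Require Import reals.
From mathcomp Require Import zify.
Set Implicit Arguments. Unset Strict Implicit. Unset Printing Implicit Defensive.
Import GRing.Theory.
Local Open Scope ring_scope.

Section Aux.
Variables (F : realType) (C : finType).

Lemma span_coord0 (X : seq 'rV[F]_#|C|) (j : 'I_#|C|) v :
  (forall x, x \in X -> x 0 j = 0) -> v \in <<X>>%VS -> v 0 j = 0.
Proof.
move=> HX /(@coord_span _ _ _ (in_tuple X)) ->.
rewrite summxE big1 // => i _; rewrite mxE.
by rewrite HX ?mulr0 // mem_nth // size_tuple.
Qed.

Lemma omegaE (y : C) j : omega F y 0 j = (enum_rank y == j)%:R.
Proof. by rewrite /omega mxE eqxx eq_sym. Qed.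

Variable E : {set C * C}.
Let g := undirected E.
Let X := [seq incidence_vec F r | r <- enum E].
Let f (x : C) := omega F x - omega F (fingraph.root g x).
Let NR := [set x | ~~ roots g x].

Lemma sym_e : connect_sym g.
Proof. by apply: sym_connect_sym => x y; rewrite /g /undirected orbC. Qed.

Lemma connect_span a b : connect g a b -> omega F b - omega F a \in <<X>>%VS.
Proof.
move/connectP=> [p]; elim: p a => [|c p IH] a /=.
  by move=> _ ->; rewrite subrr mem0v.
move=> /andP[eac pc] eb.
rewrite -[_ - omega F a](@subrKA _ (omega F c)) addrC.
apply: memvD; last by apply: IH.
case/orP: eac => H.
  by apply: memv_span; apply/mapP; exists (a, c); rewrite ?mem_enum.
rewrite -opprB memvN.
by apply: memv_span; apply/mapP; exists (c, a); rewrite ?mem_enum.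
Qed.

Lemma span_eq : (<<X>> = <<[seq f x | x <- enum NR]>>)%VS.
Proof.
have fin x : f x \in <<[seq f x | x <- enum NR]>>%VS.
  case: (boolP (roots g x)) => [r|nr]; first by rewrite /f (eqP r) subrr mem0v.
  by apply: memv_span; apply: map_f; rewrite mem_enum inE.
apply/eqP; rewrite eqEsubv; apply/andP; split; apply/span_subvP => v /mapP[r].
  rewrite mem_enum => rE ->; case: r rE => a b rE.
  have ab : fingraph.root g a = fingraph.root g b.
    by apply/(fingraph.rootP sym_e)/connect1; rewrite /g /undirected rE.
  rewrite /incidence_vec /=.
  have -> : omega F b - omega F a = f b - f a by rewrite /f ab; rewrite opprB addrA subrK.
  by apply: memvB.
move=> _ ->; rewrite /f -opprB; rewrite memvN; apply: connect_span.
exact: connect_root.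
Qed.

Lemma free_f : free [seq f x | x <- enum NR].
Proof.
have: all (fun x => x \in NR) (enum NR) by apply/allP => x; rewrite mem_enum.
have: uniq (enum NR) by apply: enum_uniq.
elim: (enum NR) => [|x s IH] /=; first by rewrite nil_free.
move=> /andP[xs us] /andP[xNR sNR]; rewrite free_cons IH // andbT.
apply/negP => /(@span_coord0 _ (enum_rank x)) H.
move: xNR; rewrite inE => nrx.
have : f x 0 (enum_rank x) = 0.
  apply: H => _ /mapP[y ys ->].
  rewrite /f !mxE eqxx /= !(inj_eq enum_rank_inj).
  have -> : (x == y) = false by apply/eqP => yx; move: ys; rewrite -yx (negbTE xs).
  have -> : (x == fingraph.root g y) = false.
    by apply/eqP => ryx; move: nrx; rewrite ryx (roots_root sym_e).
  by rewrite subrr.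
rewrite /f !mxE eqxx /= !(inj_eq enum_rank_inj) eqxx.
have -> : (x == fingraph.root g x) = false by rewrite eq_sym; apply/negbTE.
by rewrite subr0 => /eqP; rewrite oner_eq0.
Qed.

Lemma NR_sub : NR \subset complexes E.
Proof.
apply/subsetP => x; rewrite inE => nrx.
have := connect_root g x; move/connectP => [p px rx].
case: p px rx => [|c p] /=; first by move=> _ rx; move: nrx; rewrite /roots rx eqxx.
move=> /andP[exc _] _; rewrite inE; apply/existsP.
case/orP: exc => H; [exists (x, c) | exists (c, x)]; by rewrite H /= eqxx ?orbT.
Qed.

Lemma dim_image : (\dim (incidence_image F E) + nlinkage E = #|complexes E|)%N.
Proof.
have d : \dim (incidence_image F E) = #|NR|.
  rewrite /incidence_image -/X span_eq.
  by move: free_f => /eqP ->; rewrite size_map cardE.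
rewrite d /nlinkage /n_comp_mem.
rewrite -(cardID [set x | roots g x] (complexes E)).
rewrite addnC; congr (_ + _)%N.
  by apply: eq_card => x; rewrite !inE andbC.
apply: eq_card => x; rewrite !inE.
case: (boolP (roots g x)) => /= nr; rewrite ?andbF //.
by symmetry; have := subsetP NR_sub x; rewrite !inE; apply.
Qed.
End Aux.
Lemma card_sum (T : finType) (A : {set T}) : #|A| = (\sum_(y : T) (y \in A))%N.
Proof. by rewrite -sum1_card big_mkcond /=; apply: eq_bigr => y _; case: (y \in A). Qed.

Theorem proposition5 (F : realType) (C : finType) (R : {set C * C})
    (k : nat) (Rs : 'I_k -> {set C * C}) :
  is_CRN R -> is_decomposition R Rs ->
  incidence_independent F R Rs <->
  (Posz (\sum_(i < k) nlinkage (Rs i))%N - Posz (nlinkage R)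
     = Posz (\sum_(i < k) #|complexes (Rs i) :&: common_complexes Rs|)%N
       - Posz #|common_complexes Rs|)%R.
Proof.
move=> [_ Hcov] [_ _ Hdisj Hunion].
set D := common_complexes Rs.
have inC : forall y, exists i, y \in complexes (Rs i).
  move=> y; have [r rR ry] := Hcov y.
  move: rR; rewrite -Hunion => /bigcupP[i _ ri]; exists i.
  by rewrite inE; apply/existsP; exists r; rewrite ri.
have CR : complexes R = [set: C].
  apply/setP => y; rewrite !inE; have [r rR ry] := Hcov y.
  by apply/existsP; exists r; rewrite rR.
have count : (\sum_(i < k) #|complexes (Rs i)| + #|D|
   = \sum_(i < k) #|complexes (Rs i) :&: D| + #|C|)%N.
  rewrite -cardsT !card_sum.
  rewrite (eq_bigr (fun i => \sum_y (y \in complexes (Rs i)) : nat)%N);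
    last by move=> i _; rewrite card_sum.
  rewrite [X in _ = (X + _)%N](eq_bigr (fun i => \sum_y (y \in complexes (Rs i) :&: D) : nat)%N);
    last by move=> i _; rewrite card_sum.
  rewrite [X in (X + _)%N = _]exchange_big.
  rewrite [X in _ = (X + _)%N]exchange_big.
  rewrite -!big_split /=; apply: eq_bigr => y _.
  case: (boolP (y \in D)) => yD.
    by rewrite in_setT; congr (_ + _)%N; apply: eq_bigr => i _; rewrite in_setI yD andbT.
  rewrite [X in _ = (X + _)%N]big1 ?add0n ?in_setT; last by move=> i _; rewrite in_setI (negbTE yD) andbF.
  have [i yi] := inC y.
  rewrite (bigD1 i) //= yi big1 // => j ji.
  case: (boolP (y \in complexes (Rs j))) => // yj; case/negP: yD.
  rewrite inE; apply/existsP; exists i; apply/existsP; exists j.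
  by rewrite eq_sym ji yi yj.
have sumE : incidence_image F R = (\sum_(i < k) incidence_image F (Rs i))%VS.
  apply/eqP; rewrite eqEsubv; apply/andP; split.
    apply/span_subvP => v /mapP[r]; rewrite mem_enum -Hunion => /bigcupP[i _ ri] ->.
    apply: (subvP (sumv_sup i _ (subvv _))) => //.
    by apply: memv_span; apply: map_f; rewrite mem_enum.
  apply/subv_sumP => i _; apply/span_subvP => v /mapP[r]; rewrite mem_enum => ri ->.
  apply: memv_span; apply: map_f; rewrite mem_enum -Hunion.
  by apply/bigcupP; exists i.
have dR := dim_image F R; rewrite CR cardsT in dR.
have dS : (\sum_(i < k) \dim (incidence_image F (Rs i)) + \sum_(i < k) nlinkage (Rs i)
   = \sum_(i < k) #|complexes (Rs i)|)%N.
  by rewrite -big_split /=; apply: eq_bigr => i _; apply: dim_image.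
move: dR dS count; rewrite /incidence_independent.
set dr := \dim (incidence_image F R).
set ds := (\sum_(i < k) \dim (incidence_image F (Rs i)))%N.
set lr := nlinkage R. set ls := (\sum_(i < k) nlinkage (Rs i))%N.
set ns := (\sum_(i < k) #|complexes (Rs i)|)%N.
set hs := (\sum_(i < k) #|complexes (Rs i) :&: D|)%N.
set d := #|D|. set n := #|C|.
move=> dR dS count.
split.
  case=> _ /directvP /= H; move: H; rewrite -sumE -/dr -/ds => H.
  lia.
move=> H; split => //; apply/directvP; rewrite /= -sumE -/dr -/ds.
lia.
Qed.
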